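(* Let $0<q\leq 1$, let $D\in\mathbb{R}^{n\times d}$ be a frame with frame bounds $0<\mathcal{L}\leq\mathcal{U}<\infty$, $\kappa=\mathcal{U}/\mathcal{L}$, let $A\in\mathbb{R}^{m\times n}$, and let $s<a$ be positive integers. Assume $A$ satisfies the $(D^{\dagger},q)$-RIP of order $s+a$ (with $(D^\dagger,q)$-RIP constants $\delta_a$ and $\delta_{s+a}<1$), and let $\Delta=\frac{1+\delta_a}{1-\delta_{s+a}}$. Let $h\in\mathbb{R}^n$ be arbitrary and let $T=T_0,T_1,T_2,\dots$ and $T_{01}=T_0\cup T_1$ be the index sets associated with $D^*h$ as described in the context. Then $$\|DD_{T_{01}}^*h\|_2^2\leq\kappa\,\mathcal{U}\,\Delta^{2/q}a^{1-2/q}\left(\|D_{T^c}^*h\|_q^q+\frac{\mathcal{L}^{q/2}a^{1-q/2}\|Ah\|_q^q}{1+\delta_a}\right)^{2/q}.$$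
   Context: $D$ is a frame with frame bounds $\mathcal{L},\mathcal{U}$ if $\mathcal{L}\|f\|_2^2\leq\|D^*f\|_2^2\leq\mathcal{U}\|f\|_2^2$ for all $f\in\mathbb{R}^n$; $D^{\dagger}=(DD^* )^{-1}D$. $A$ obeys the $(D^\dagger,q)$-RIP of order $k$ with constant $\delta\in[0,1)$ if $(1-\delta)\|D^\dagger v\|_2^q\leq\|AD^\dagger v\|_q^q\leq(1+\delta)\|D^\dagger v\|_2^q$ for all $v\in\mathbb{R}^d$ with at most $k$ nonzero entries; $\delta_k$ is the smallest such $\delta$. Index sets: write $D^*h=(x_1,\dots,x_d)^T$ and, after reordering indices, assume $|x_1|\geq|x_2|\geq\cdots\geq|x_d|$; set $T=T_0=\{1,\dots,s\}$, $T_1=\{s+1,\dots,s+a\}$, $T_i=\{s+(i-1)a+1,\dots,s+ia\}$ for $i\geq 2$ (the last one possibly of size less than $a$), $T_{01}=T_0\cup T_1$, and $T^c=[d]\setminus T$. For $S\subset[d]$, $D_S$ is the $n\times d$ matrix obtained from $D$ by setting the columns indexed outside $S$ to zero, so $D_S^*h$ is $D^*h$ restricted to $S$. *)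

(* Defs.v *)
From HB Require Import structures.
From mathcomp Require Import all_boot all_order all_algebra all_fingroup.
From mathcomp Require Import all_classical all_reals all_analysis.
Set Implicit Arguments. Unset Strict Implicit. Unset Printing Implicit Defensive.
Import Order.TTheory GRing.Theory Num.Theory.
Local Open Scope ring_scope.

Section Defs.
Variable R : realType.

Definition norm2 (n : nat) (v : 'cV[R]_n) : R := Num.sqrt (\sum_i (v i 0) ^+ 2).

Definition normqq (n : nat) (q : R) (v : 'cV[R]_n) : R := \sum_i `|v i 0| `^ q.

Definition is_frame (n d : nat) (D : 'M[R]_(n, d)) (L U : R) : Prop :=
  forall f : 'cV[R]_n,
    L * norm2 f ^+ 2 <= norm2 (D^T *m f) ^+ 2 <= U * norm2 f ^+ 2.

Definition Ddag (n d : nat) (D : 'M[R]_(n, d)) : 'M[R]_(n, d) :=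
  invmx (D *m D^T) *m D.

Definition Dsub (n d : nat) (D : 'M[R]_(n, d)) (S : {set 'I_d}) : 'M[R]_(n, d) :=
  \matrix_(i, j) (if j \in S then D i j else 0).

Definition sparse (d k : nat) (v : 'cV[R]_d) : Prop :=
  (#|[set i | v i ord0 != 0%R]| <= k)%N.

Definition Dq_RIP (m n d : nat) (A : 'M[R]_(m, n)) (D : 'M[R]_(n, d)) (q : R)
    (k : nat) (delta : R) : Prop :=
  0 <= delta < 1 /\
  forall v : 'cV[R]_d, sparse k v ->
    (1 - delta) * norm2 (Ddag D *m v) `^ q <= normqq q (A *m (Ddag D *m v)) <=
    (1 + delta) * norm2 (Ddag D *m v) `^ q.

Definition Dq_RIP_const (m n d : nat) (A : 'M[R]_(m, n)) (D : 'M[R]_(n, d)) (q : R)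
    (k : nat) (delta : R) : Prop :=
  Dq_RIP A D q k delta /\ forall delta', Dq_RIP A D q k delta' -> delta <= delta'.

Definition sorting_perm (d : nat) (x : 'cV[R]_d) (sigma : 'S_d) : Prop :=
  forall i j : 'I_d, (i <= j)%N -> `|x (sigma j) 0| <= `|x (sigma i) 0|.

Definition T0 (d s : nat) (sigma : 'S_d) : {set 'I_d} :=
  [set sigma i | i : 'I_d & (i < s)%N].
Definition T1 (d s a : nat) (sigma : 'S_d) : {set 'I_d} :=
  [set sigma i | i : 'I_d & (s <= i < s + a)%N].

End Defs.

(* Main.v *)
Require Import Defs.
From HB Require Import structures.
From mathcomp Require Import all_boot all_order all_algebra all_fingroup.
From mathcomp Require Import all_classical all_reals all_analysis.
From mathcomp Require Import ring lra zify.
Set Implicit Arguments. Unset Strict Implicit. Unset Printing Implicit Defensive.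
Import Order.TTheory GRing.Theory Num.Theory.
Local Open Scope ring_scope.

Definition ip (R : realType) (k : nat) (u v : 'cV[R]_k) : R := (u^T *m v) 0 0.

Lemma ipE (R : realType) k (u v : 'cV[R]_k) : ip u v = \sum_i u i 0 * v i 0.
Proof. by rewrite /ip mxE; apply: eq_bigr => i _; rewrite mxE. Qed.

Lemma ipC (R : realType) k (u v : 'cV[R]_k) : ip u v = ip v u.
Proof. by rewrite !ipE; apply: eq_bigr => i _; rewrite mulrC. Qed.

Lemma ipT (R : realType) k l (M : 'M[R]_(k,l)) u v : ip u (M *m v) = ip (M^T *m u) v.
Proof. by rewrite /ip trmx_mul trmxK mulmxA. Qed.

Lemma n2sq (R : realType) k (v : 'cV[R]_k) : norm2 v ^+ 2 = ip v v.
Proof.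
rewrite /norm2 sqr_sqrtr ?ipE; last by apply: sumr_ge0 => i _; exact: sqr_ge0.
by apply: eq_bigr => i _; rewrite expr2.
Qed.

Lemma ip_ge0 (R : realType) k (v : 'cV[R]_k) : 0 <= ip v v.
Proof. by rewrite -n2sq sqr_ge0. Qed.

Lemma ip_le (R : realType) k (c : R) (u v : 'cV[R]_k) :
  2 * c * ip u v <= c ^+ 2 * ip u u + ip v v.
Proof.
rewrite !ipE !mulr_sumr -big_split /= ler_sum // => i _.
have := sqr_ge0 (c * u i 0 - v i 0); nra.
Qed.

Lemma ip_eq0 (R : realType) k (v : 'cV[R]_k) : ip v v = 0 -> v = 0.
Proof.
rewrite ipE => /eqP; rewrite psumr_eq0; last by move=> i _; rewrite -expr2 sqr_ge0.
move=> /allP H; apply/matrixP => i j; rewrite (ord1 j) mxE.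
have := H i (mem_index_enum _); rewrite -expr2 sqrf_eq0 => /eqP //.
Qed.

Lemma frame_sq (R : realType) n d (D : 'M[R]_(n,d)) (L U : R) :
  is_frame D L U -> forall f, L * ip f f <= ip (D^T *m f) (D^T *m f) <= U * ip f f.
Proof. by move=> H f; rewrite -!n2sq; exact: H. Qed.

Lemma frame_unit (R : realType) n d (D : 'M[R]_(n,d)) (L U : R) :
  0 < L -> is_frame D L U -> (D *m D^T) \in unitmx.
Proof.
move=> L0 /frame_sq H; rewrite -row_free_unit -kermx_eq0; apply/negPn/negP.
case/rowV0Pn => u /sub_kermxP uM u0.
have Hf : (D *m D^T) *m u^T = 0.
  by rewrite -[D *m D^T]trmxK trmx_mul trmxK -trmx_mul uM trmx0.
have := H u^T; rewrite -ipT mulmxA Hf.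
have -> : ip u^T 0 = 0 by rewrite ipE big1 // => i _; rewrite [in X in _ * X]mxE mulr0.
move=> /andP[h1 _].
have : ip u^T u^T = 0.
  apply/eqP; rewrite eq_le ip_ge0 andbT.
  by rewrite -(ler_pM2l L0) mulr0.
move/ip_eq0 => /(congr1 trmx); rewrite trmxK trmx0 => /eqP; by rewrite (negbTE u0).
Qed.

Lemma frame_up (R : realType) n d (D : 'M[R]_(n,d)) (L U : R) :
  0 < U -> is_frame D L U -> forall z : 'cV[R]_d, ip (D *m z) (D *m z) <= U * ip z z.
Proof.
move=> U0 /frame_sq H z; set f := D *m z.
have e : ip f f = ip z (D^T *m f) by rewrite {2}/f ipT ipC.
have h1 := ip_le U z (D^T *m f).
have /andP[_ h2] := H f.
rewrite -e in h1.
have : U * ip f f <= U * (U * ip z z) by nra.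
by rewrite ler_pM2l.
Qed.

Lemma Ddag_left (R : realType) n d (D : 'M[R]_(n,d)) (L U : R) :
  0 < L -> is_frame D L U -> forall h : 'cV[R]_n, Ddag D *m (D^T *m h) = h.
Proof.
move=> L0 F h; rewrite /Ddag -mulmxA (mulmxA D) mulKmx //.
exact: frame_unit L0 F.
Qed.

Lemma D_Ddag (R : realType) n d (D : 'M[R]_(n,d)) (L U : R) :
  0 < L -> is_frame D L U -> forall w : 'cV[R]_d, (D *m D^T) *m (Ddag D *m w) = D *m w.
Proof.
move=> L0 F w; rewrite /Ddag !mulmxA mulmxV ?mul1mx //.
exact: frame_unit L0 F.
Qed.

Lemma frame_low (R : realType) n d (D : 'M[R]_(n,d)) (L U : R) :
  0 < L -> is_frame D L U -> forall v : 'cV[R]_d, L * ip (Ddag D *m v) (Ddag D *m v) <= ip v v.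
Proof.
move=> L0 F v; set y := Ddag D *m v.
have My : (D *m D^T) *m y = D *m v by exact: D_Ddag L0 F v.
set g := ip (D^T *m y) (D^T *m y).
have e : g = ip (D^T *m y) v.
  by rewrite /g -ipT mulmxA My ipT.
have h1 := ip_le 1 (D^T *m y) v.
have /andP[h2 _] := frame_sq F y.
rewrite -e in h1. rewrite expr1n mul1r mulr1 in h1. rewrite -/g in h1 h2. lra.
Qed.

Lemma powR_subadd (R : realType) (q a b : R) : 0 < q -> q <= 1 -> 0 <= a -> 0 <= b ->
  (a + b) `^ q <= a `^ q + b `^ q.
Proof.
move=> q0 q1 a0 b0.
have [ab0|abp] := eqVneq (a + b) 0.
  have -> : a = 0 by lra.
  have -> : b = 0 by lra.
  by rewrite addr0 powR0 ?gt_eqF // addr0.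
have abg : 0 < a + b by rewrite lt_neqAle eq_sym abp addr_ge0.
have key : forall t, 0 <= t -> t <= a + b -> t / (a + b) * (a + b) `^ q <= t `^ q.
  move=> t t0 tab.
  have -> : t = (t / (a + b)) * (a + b) by rewrite divfK // gt_eqF.
  rewrite mulfK ?gt_eqF // powRM; last 2 first.
  - by rewrite divr_ge0 // ltW.
  - exact: ltW.
  rewrite ler_wpM2r ?powR_ge0 //.
  have [->|tp] := eqVneq t 0; first by rewrite mul0r powR0 ?gt_eqF.
  apply: ger1_powR => //; apply/andP; split.
    by rewrite divr_gt0 // lt_neqAle eq_sym tp.
  by rewrite ler_pdivrMr // mul1r.
have ha : a <= a + b by lra.
have hb : b <= a + b by lra.
have := key a a0 ha; have := key b b0 hb.
have : a / (a + b) * (a + b) `^ q + b / (a + b) * (a + b) `^ q = (a + b) `^ q.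
  by rewrite -mulrDl -mulrDl divff ?gt_eqF // mul1r.
lra.
Qed.

Lemma normqq_ge0 (R : realType) k (q : R) (v : 'cV[R]_k) : 0 <= normqq q v.
Proof. by apply: sumr_ge0 => i _; exact: powR_ge0. Qed.

Lemma normqq0 (R : realType) k (q : R) : 0 < q -> normqq q (0 : 'cV[R]_k) = 0.
Proof. by move=> q0; rewrite /normqq big1 // => i _; rewrite mxE normr0 powR0 // gt_eqF. Qed.

Lemma normqqN (R : realType) k (q : R) (v : 'cV[R]_k) : normqq q (- v) = normqq q v.
Proof. by apply: eq_bigr => i _; rewrite mxE normrN. Qed.

Lemma normqqD (R : realType) k (q : R) (u v : 'cV[R]_k) : 0 < q -> q <= 1 ->
  normqq q (u + v) <= normqq q u + normqq q v.
Proof.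
move=> q0 q1; rewrite /normqq -big_split /= ler_sum // => i _; rewrite mxE.
apply: le_trans (powR_subadd q0 q1 (normr_ge0 _) (normr_ge0 _)).
by apply: ge0_ler_powR; rewrite ?nnegrE ?addr_ge0 ?ler_normD // ltW.
Qed.

Lemma normqq_sum (R : realType) k (q : R) I (r : seq I) (P : pred I) (F : I -> 'cV[R]_k) :
  0 < q -> q <= 1 ->
  normqq q (\sum_(i <- r | P i) F i) <= \sum_(i <- r | P i) normqq q (F i).
Proof.
move=> q0 q1; elim/big_rec2: _; first by rewrite normqq0.
move=> i y1 y2 _ H; apply: le_trans (normqqD _ _ q0 q1) _.
by rewrite lerD2l.
Qed.
Local Close Scope ring_scope.
Definition inblk (s a J p : nat) := (0 < J) && (s + J.-1 * a <= p < s + J * a).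

Lemma inblk_uniq s a J J' p : inblk s a J p -> inblk s a J' p -> J = J'.
Proof.
rewrite /inblk => /and3P[J0 h1 h2] /and3P[J'0 h3 h4].
case: (ltngtP J J') => // H.
- have : J * a <= J'.-1 * a by rewrite leq_mul2r; apply/orP; right; lia.
  lia.
- have : J' * a <= J.-1 * a by rewrite leq_mul2r; apply/orP; right; lia.
  lia.
Qed.

Lemma inblk_ex s a p : 0 < a -> 0 < s -> s + a <= p -> exists J, [/\ 2 <= J, J <= p & inblk s a J p].
Proof.
move=> a0 s0 hp; exists ((p - s) %/ a).+1; split.
- have : 1 <= (p - s) %/ a by rewrite leq_divRL //; lia.
  lia.
- have := leq_div (p - s) a; lia.
- rewrite /inblk /=; apply/andP; split.
  have := leq_trunc_div (p - s) a; lia.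
  have := ltn_ceil (p - s) a0; lia.
Qed.

Lemma inblk_ge s a J p : 0 < a -> 2 <= J -> inblk s a J p -> s + a <= p.
Proof.
move=> a0 J2 /and3P[_ h1 _].
have : 1 * a <= J.-1 * a by rewrite leq_mul2r; apply/orP; right; lia.
lia.
Qed.

Lemma inblk_ge1 s a J p : inblk s a J p -> s <= p.
Proof. by move=> /and3P[_ h1 _]; exact: leq_trans (leq_addr _ _) h1. Qed.

Lemma inblk_shift s a J p t : inblk s a J.+2 p -> t < a ->
  inblk s a J.+1 (s + J * a + t) /\ s + J * a + t < p.
Proof.
move=> /and3P[_ h1 h2] ta; rewrite /inblk /=; rewrite mulSn in h1 *; lia.
Qed.

Local Open Scope ring_scope.

Definition restrict (R : realType) d (S : {set 'I_d}) (x : 'cV[R]_d) : 'cV[R]_d :=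
  \col_i (if i \in S then x i 0 else 0).

Definition Bset d (s a : nat) (sigma : 'S_d) (J : nat) : {set 'I_d} :=
  [set i : 'I_d | inblk s a J ((sigma^-1)%g i)].

Lemma memT0 d s (sigma : 'S_d) i : (i \in T0 s sigma) = ((sigma^-1)%g i < s)%N.
Proof.
apply/imsetP/idP => [[j]|H]; first by rewrite inE => jlt ->; rewrite permK.
by exists ((sigma^-1)%g i); rewrite ?inE ?permKV.
Qed.

Lemma memT1 d s a (sigma : 'S_d) i : (i \in T1 s a sigma) = (s <= (sigma^-1)%g i < s + a)%N.
Proof.
apply/imsetP/idP => [[j]|H]; first by rewrite inE => jlt ->; rewrite permK.
by exists ((sigma^-1)%g i); rewrite ?inE ?permKV.
Qed.

Lemma Dsub_restr (R : realType) n d (D : 'M[R]_(n,d)) S (h : 'cV[R]_n) :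
  (Dsub D S)^T *m h = restrict S (D^T *m h).
Proof.
apply/matrixP => i j; rewrite (ord1 j) !mxE.
case: ifP => iS; first by apply: eq_bigr => k _; rewrite !mxE iS.
by rewrite big1 // => k _; rewrite !mxE iS mul0r.
Qed.

Lemma card_range d (P : pred 'I_d) lo n :
  (forall p, P p -> lo <= p < lo + n)%N -> (#|[set p | P p]| <= n)%N.
Proof.
move=> HP.
pose f (p : 'I_d) : 'I_n.+1 := inord (p - lo).
have fv : forall p, P p -> nat_of_ord (f p) = (p - lo)%N.
  move=> p Pp; rewrite /f inordK //; have := HP p Pp; lia.
rewrite -(card_in_imset (f := f)); last first.
  move=> p p'; rewrite !inE => Pp Pp' /(congr1 val); rewrite /= !fv //.
  move=> e; apply: val_inj => /=; have := HP p Pp; have := HP p' Pp'; lia.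
rewrite -[n]/(n.+1.-1) -[X in (_ <= X.-1)%N](card_ord n.+1) -(cardsC1 ord_max).
apply: subset_leq_card; apply/fintype.subsetP => k /imsetP[p]; rewrite !inE => Pp ->.
apply/eqP => /(congr1 val) /=; rewrite fv //= => e; have := HP p Pp; lia.
Qed.

Lemma card_Bset d s a (sigma : 'S_d) J : (#|Bset s a sigma J| <= a)%N.
Proof.
have -> : Bset s a sigma J = sigma @: [set p : 'I_d | inblk s a J p].
  apply/setP => i; rewrite inE; apply/idP/imsetP => [H|[p]].
    by exists ((sigma^-1)%g i); rewrite ?inE ?permKV.
  by rewrite inE => Hp ->; rewrite permK.
apply: leq_trans (leq_imset_card _ _) _.
apply: (card_range (lo := (s + J.-1 * a)%N)) => p /and3P[_ h1 h2].
by rewrite h1 /=; case: J h1 h2 => [|J] //= h1 h2; rewrite ?mulSn in h2; lia.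
Qed.

Lemma normqq_restr (R : realType) d (q : R) (S : {set 'I_d}) (x : 'cV[R]_d) : 0 < q ->
  normqq q (restrict S x) = \sum_(i in S) `|x i 0| `^ q.
Proof.
move=> q0; rewrite /normqq (bigID (mem S)) /= [X in _ + X]big1 ?addr0.
  by apply: eq_bigr => i iS; rewrite mxE iS.
by move=> i /negbTE iS; rewrite mxE iS normr0 powR0 // gt_eqF.
Qed.

Lemma ip_restr (R : realType) d (S : {set 'I_d}) (x : 'cV[R]_d) :
  ip (restrict S x) (restrict S x) = \sum_(i in S) x i 0 ^+ 2.
Proof.
rewrite ipE (bigID (mem S)) /= [X in _ + X]big1 ?addr0.
  by apply: eq_bigr => i iS; rewrite mxE iS expr2.
by move=> i /negbTE iS; rewrite mxE iS mul0r.
Qed.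

Lemma sparse_restr (R : realType) d k (S : {set 'I_d}) (x : 'cV[R]_d) :
  (#|S| <= k)%N -> sparse k (restrict S x).
Proof.
move=> H; rewrite /sparse; apply: leq_trans _ H; apply: subset_leq_card.
apply/fintype.subsetP => i; rewrite inE mxE; case: ifP => // _; by rewrite eqxx.
Qed.

Lemma one_term (R : realType) N (P C : pred 'I_N) (c : R) :
  (forall J J', P J -> P J' -> C J -> C J' -> J = J') ->
  \sum_(J < N | P J) (if C J then c else 0) = if [exists J, P J && C J] then c else 0.
Proof.
move=> U; case: ifP => [/existsP[J0 /andP[P0 C0]]|/existsP H].
  rewrite (bigD1 J0) //= C0 big1 ?addr0 // => J /andP[PJ JJ0]; case: ifP => // CJ.
  by move: JJ0; rewrite (U _ _ PJ P0 CJ C0) eqxx.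
by rewrite big1 // => J PJ; case: ifP => // CJ; case: H; exists J; rewrite PJ CJ.
Qed.

Lemma decomp (R : realType) d s a (sigma : 'S_d) (x : 'cV[R]_d) : (0 < a)%N -> (0 < s)%N ->
  x = restrict (T0 s sigma :|: T1 s a sigma) x +
      \sum_(J < d.+1 | (2 <= J)%N) restrict (Bset s a sigma J) x.
Proof.
move=> a0 s0; apply/matrixP => i j; rewrite (ord1 j) !mxE summxE.
under eq_bigr => J _ do rewrite mxE.
rewrite one_term; last first.
  by move=> J J' _ _; rewrite !inE => h1 h2; apply: val_inj; exact: inblk_uniq h1 h2.
rewrite inE memT0 memT1.
set p := (sigma^-1)%g i.
have [lt|ge] := ltnP p (s + a).
  rewrite andbT.
  have -> : ((p < s) || (s <= p))%N = true by case: ltnP.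
  case: existsP => [[J /andP[J2]]|_]; last by rewrite addr0.
  by rewrite inE => /(inblk_ge a0 J2); rewrite leqNgt lt.
rewrite andbF orbF.
have -> : (p < s)%N = false by apply/negbTE; rewrite -leqNgt; lia.
case: existsP => [_|[]]; first by rewrite add0r.
have [J [J2 Jp HJ]] := inblk_ex a0 s0 ge.
have Jd : (J < d.+1)%N by have := ltn_ord p; lia.
exists (Ordinal Jd); rewrite /= J2 inE; exact HJ.
Qed.

Lemma norm2_ip (R : realType) k (v : 'cV[R]_k) : norm2 v = Num.sqrt (ip v v).
Proof. by rewrite /norm2 ipE; congr Num.sqrt; apply: eq_bigr => i _; rewrite expr2. Qed.

Lemma count_bound (R : realType) d s a (sigma : 'S_d) (x : 'cV[R]_d) (q : R) J i :
  0 <= q -> sorting_perm x sigma -> i \in Bset s a sigma J.+2 ->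
  a%:R * `|x i 0| `^ q <= \sum_(k in Bset s a sigma J.+1) `|x k 0| `^ q.
Proof.
move=> q0 so; rewrite inE => Hp.
set p := (sigma^-1)%g i in Hp.
pose g (t : 'I_a) : 'I_d := sigma (insubd p (s + J * a + t)%N).
have gv : forall t : 'I_a, (sigma^-1)%g (g t) = insubd p (s + J * a + t)%N by move=> t; rewrite permK.
have gvv : forall t : 'I_a, nat_of_ord (insubd p (s + J * a + t)%N) = (s + J * a + t)%N.
  move=> t; rewrite val_insubd; have [_ h] := inblk_shift Hp (ltn_ord t).
  by have := ltn_ord p; case: ifP => //; lia.
have ginj : injective g.
  move=> t t' /perm_inj /(congr1 val) /=; rewrite !gvv => e; apply: val_inj => /=; lia.
set img := [set g t | t in [set: 'I_a]].
have sub : img \subset Bset s a sigma J.+1.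
  apply/fintype.subsetP => k /imsetP[t _ ->]; rewrite inE gv.
  by have [h _] := inblk_shift Hp (ltn_ord t); rewrite gvv.
rewrite (big_setID img) /= (finset.setIidPr sub).
have H2 : 0 <= \sum_(k in Bset s a sigma J.+1 :\: img) `|x k 0| `^ q.
  by apply: sumr_ge0 => k _; exact: powR_ge0.
suff : a%:R * `|x i 0| `^ q <= \sum_(k in img) `|x k 0| `^ q by lra.
apply: (@le_trans _ _ (\sum_(k in img) `|x i 0| `^ q)).
  by rewrite sumr_const card_imset // cardsT card_ord mulr_natl.
apply: ler_sum => k /imsetP[t _ ->].
apply: ge0_ler_powR; rewrite ?nnegrE ?normr_ge0 //.
have [_ h] := inblk_shift Hp (ltn_ord t).
have := so (insubd p (s + J * a + t)%N) p; rewrite /p permKV; apply.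
by rewrite gvv; apply: ltnW.
Qed.

Lemma shift (R : realType) d s a (sigma : 'S_d) (x : 'cV[R]_d) (q : R) J :
  0 < q -> (0 < a)%N -> sorting_perm x sigma ->
  norm2 (restrict (Bset s a sigma J.+2) x) `^ q <=
  a%:R `^ (q / 2) * (normqq q (restrict (Bset s a sigma J.+1) x) / a%:R).
Proof.
move=> q0 a0 so.
have ar : 0 < a%:R :> R by rewrite ltr0n.
set M := normqq q (restrict (Bset s a sigma J.+1) x) / a%:R.
have M0 : 0 <= M by rewrite divr_ge0 ?normqq_ge0 ?ler0n.
have hM : forall i, i \in Bset s a sigma J.+2 -> `|x i 0| `^ q <= M.
  move=> i iB; rewrite /M ler_pdivlMr // mulrC normqq_restr //.
  exact: count_bound (ltW q0) so iB.
have hsq : forall i, i \in Bset s a sigma J.+2 -> x i 0 ^+ 2 <= M `^ (2 / q).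
  move=> i iB; rewrite -(real_normK (num_real _)) -powR_mulrn ?normr_ge0 //.
  have -> : `|x i 0| `^ 2%:R = (`|x i 0| `^ q) `^ (2 / q).
    by rewrite -powRrM; congr powR; field; rewrite gt_eqF.
  apply: ge0_ler_powR; rewrite ?nnegrE ?powR_ge0 ?hM //.
  by rewrite divr_ge0 // ltW.
set w := restrict _ x.
have hsum : ip w w <= a%:R * M `^ (2 / q).
  rewrite ip_restr; apply: le_trans (ler_sum _ hsq) _.
  rewrite sumr_const -[X in X <= _]mulr_natl ler_wpM2r ?powR_ge0 // ler_nat.
  exact: card_Bset.
rewrite norm2_ip -powR12_sqrt ?ip_ge0 // -powRrM.
have -> : 2^-1 * q = q / 2 by rewrite mulrC.
apply: le_trans (ge0_ler_powR _ _ _ hsum) _; rewrite ?nnegrE ?ip_ge0 ?mulr_ge0 ?powR_ge0 ?ler0n //.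
  exact: ltW.
rewrite powRM ?ler0n ?powR_ge0 // -powRrM.
have -> : 2 / q * (q / 2) = 1 by field; rewrite gt_eqF.
by rewrite powRr1.
Qed.

Lemma normqq_restr' (R : realType) d (q : R) (S : {set 'I_d}) (x : 'cV[R]_d) : 0 < q ->
  normqq q (restrict S x) = \sum_i (if i \in S then `|x i 0| `^ q else 0).
Proof.
move=> q0; apply: eq_bigr => i _; rewrite mxE; case: ifP => //.
by rewrite normr0 powR0 // gt_eqF.
Qed.

Lemma tail (R : realType) d s a (sigma : 'S_d) (x : 'cV[R]_d) (q : R) :
  0 < q ->
  \sum_(J < d.+1 | (2 <= J)%N) normqq q (restrict (Bset s a sigma J.-1) x) <=
  normqq q (restrict (~: T0 s sigma) x).
Proof.
move=> q0.
under eq_bigr => J _ do rewrite normqq_restr' //.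
rewrite exchange_big /= normqq_restr' //; apply: ler_sum => k _.
rewrite one_term; last first.
  move=> J J' J2 J'2; rewrite !inE => h1 h2; apply: val_inj.
  have := inblk_uniq h1 h2; move: J2 J'2 => /= J2 J'2; lia.
case: existsP => [[J /andP[J2]]|_]; last by case: ifP => // _; exact: powR_ge0.
rewrite !inE memT0 => /inblk_ge1 h; by rewrite -leqNgt h.
Qed.

Lemma n2pow (R : realType) k (v : 'cV[R]_k) (r : R) : norm2 v `^ r = (ip v v) `^ (r / 2).
Proof. by rewrite norm2_ip -powR12_sqrt ?ip_ge0 // -powRrM mulrC. Qed.

Lemma Ddag_pow (R : realType) n d (D : 'M[R]_(n,d)) (L U q : R) :
  0 < L -> 0 < q -> is_frame D L U -> forall v : 'cV[R]_d,
  norm2 (Ddag D *m v) `^ q <= L^-1 `^ (q / 2) * norm2 v `^ q.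
Proof.
move=> L0 q0 F v; have L0' := ltW L0; have q0' := ltW q0.
rewrite !n2pow -powRM ?invr_ge0 ?ip_ge0 //.
apply: ge0_ler_powR; rewrite ?nnegrE ?ip_ge0 ?mulr_ge0 ?invr_ge0 ?ip_ge0 //.
by rewrite mulrC ler_pdivlMr // mulrC (frame_low L0 F).
Qed.

Lemma alg_step (R : realType) (Nq Y X c1 LA da dsa : R) : 0 <= da -> dsa < 1 ->
  c1 * LA = 1 -> (1 - dsa) * Nq <= Y + (1 + da) * c1 * X ->
  Nq <= (1 + da) / (1 - dsa) * c1 * (X + LA * Y / (1 + da)).
Proof.
move=> da0 dsa1 P H.
have -> : (1 + da) / (1 - dsa) * c1 * (X + LA * Y / (1 + da)) =
   ((1 + da) * c1 * X + (c1 * LA) * Y) / (1 - dsa).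
  by field; apply/andP; split; rewrite gt_eqF //; lra.
rewrite P mul1r ler_pdivlMr; last by lra.
nra.
Qed.

Lemma alg2 (R : realType) (x y u v a : R) : x * u = 1 -> y * v = a -> a != 0 ->
  x * y / a * (u * v) = 1.
Proof.
move=> h1 h2 a0.
have -> : x * y / a * (u * v) = (x * u) * (y * v) / a by ring.
by rewrite h1 h2 mul1r divff.
Qed.

Lemma alg3 (R : realType) (n2 N2 U Li P Q Z : R) :
  n2 <= U ^+ 2 * N2 -> N2 <= P * (Li * Q) * Z -> n2 <= U * Li * U * P * Q * Z.
Proof.
move=> h1 h2; apply: le_trans h1 _.
have -> : U * Li * U * P * Q * Z = U ^+ 2 * (P * (Li * Q) * Z) by ring.
by rewrite ler_wpM2l // sqr_ge0.
Qed.

Unset Implicit Arguments.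
Set Strict Implicit.

Theorem lemma2p6 (R : realType) (m n d : nat) (q L U : R)
    (D : 'M[R]_(n, d)) (A : 'M[R]_(m, n)) (s a : nat) (delta_a delta_sa : R) :
  0 < q -> q <= 1 ->
  0 < L -> L <= U -> is_frame D L U ->
  (0 < s)%N -> (s < a)%N ->
  Dq_RIP A D q (s + a) delta_sa ->
  Dq_RIP_const A D q a delta_a ->
  Dq_RIP_const A D q (s + a) delta_sa ->
  delta_sa < 1 ->
  forall (h : 'cV[R]_n) (sigma : 'S_d),
    sorting_perm (D^T *m h) sigma ->
    let kappa := U / L in
    let Delta := (1 + delta_a) / (1 - delta_sa) in
    let T := T0 s sigma in
    let T01 := T0 s sigma :|: T1 s a sigma in
    norm2 (D *m ((Dsub D T01)^T *m h)) ^+ 2 <=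
      kappa * U * Delta `^ (2 / q) * a%:R `^ (1 - 2 / q) *
      (normqq q ((Dsub D (~: T))^T *m h) +
       L `^ (q / 2) * a%:R `^ (1 - q / 2) * normqq q (A *m h) / (1 + delta_a))
        `^ (2 / q).
Proof.
move=> q0 q1 L0 LU F s0 sa [/andP[dsa0 _] RIPsa] [[/andP[da0 _] RIPa] _] _ dsa1 h sigma so.
cbv zeta.
have a0 : (0 < a)%N by apply: leq_trans s0 (ltnW sa).
have U0 : 0 < U by apply: lt_le_trans L0 LU.
have ar : 0 < a%:R :> R by rewrite ltr0n.
have q0' := ltW q0.
rewrite !Dsub_restr; set x := D^T *m h.
set w := restrict (T0 s sigma :|: T1 s a sigma) x.
set N := norm2 (Ddag D *m w).
have N0 : 0 <= N by rewrite /N norm2_ip sqrtr_ge0.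
have H1 : norm2 (D *m w) ^+ 2 <= U ^+ 2 * N ^+ 2.
  rewrite !n2sq -(D_Ddag L0 F w) -mulmxA; set y := Ddag D *m w.
  apply: le_trans (frame_up U0 F _) _.
  have /andP[_ h2] := frame_sq F y.
  rewrite expr2 -mulrA ler_pM2l //.
have cT01 : (#|T0 s sigma :|: T1 s a sigma| <= s + a)%N.
  rewrite cardsU; apply: leq_trans (leq_subr _ _) _; apply: leq_add.
    apply: leq_trans (leq_imset_card _ _) _.
    by apply: (card_range (lo := 0%N)) => p /= hp; rewrite add0n hp.
  apply: leq_trans (leq_imset_card _ _) _.
  by apply: (card_range (lo := s)) => p /=.
have H2 : (1 - delta_sa) * N `^ q <= normqq q (A *m (Ddag D *m w)).
  by have /andP[] := RIPsa w (sparse_restr _ cT01).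
set wJ := fun J : 'I_d.+1 => restrict (Bset s a sigma J) x.
have eh : A *m h = A *m (Ddag D *m w) + \sum_(J < d.+1 | (2 <= J)%N) A *m (Ddag D *m wJ J).
  rewrite -{1}(Ddag_left L0 F h) -/x {1}(@decomp R d s a sigma x a0 s0).
  by rewrite !mulmxDr !mulmx_sumr.
have eAw : A *m (Ddag D *m w) = A *m h + - \sum_(J < d.+1 | (2 <= J)%N) A *m (Ddag D *m wJ J).
  by rewrite eh addrK.
set Y := normqq q (A *m h).
set X := normqq q (restrict (~: T0 s sigma) x).
set Li := L^-1.
set c1 := Li `^ (q / 2) * a%:R `^ (q / 2) / a%:R.
have c10 : 0 <= c1 by rewrite /c1 divr_ge0 ?mulr_ge0 ?powR_ge0 ?ler0n.
have H4 : normqq q (A *m (Ddag D *m w)) <= Y + (1 + delta_a) * c1 * X.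
  rewrite eAw; apply: le_trans (normqqD _ _ q0 q1) _; rewrite normqqN lerD2l.
  apply: le_trans (normqq_sum _ _ _ q0 q1) _.
  apply: (@le_trans _ _ (\sum_(J < d.+1 | (2 <= J)%N) (1 + delta_a) * c1 *
      normqq q (restrict (Bset s a sigma J.-1) x))); last first.
    rewrite -mulr_sumr ler_wpM2l ?tail //.
    by rewrite mulr_ge0 // addr_ge0.
  apply: ler_sum => J J2.
  have /andP[_ hJ] := RIPa (wJ J) (sparse_restr _ (card_Bset s a sigma J)).
  apply: le_trans hJ _; rewrite -mulrA ler_wpM2l ?addr_ge0 //.
  apply: le_trans (Ddag_pow L0 q0 F _) _.
  have -> : c1 * normqq q (restrict (Bset s a sigma J.-1) x) =
    Li `^ (q / 2) * (a%:R `^ (q / 2) * (normqq q (restrict (Bset s a sigma J.-1) x) / a%:R)).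
    by rewrite /c1 -!mulrA [_^-1 * _]mulrC.
  rewrite ler_wpM2l ?powR_ge0 //.
  rewrite /wJ.
  have -> : nat_of_ord J = (J.-2).+2 by move: J2; case: (nat_of_ord J) => [|[|j]].
  exact: (@shift R d s a sigma x q J.-2 q0 a0 so).
have H5 := le_trans H2 H4.
have P3 : c1 * (L `^ (q / 2) * a%:R `^ (1 - q / 2)) = 1.
  apply: alg2; last by rewrite gt_eqF.
    by rewrite /Li -powRM ?invr_ge0 ?ltW // mulVf ?gt_eqF // powR1.
  rewrite -powRD; last by rewrite pnatr_eq0 -lt0n a0 implybT.
  by rewrite addrC subrK powRr1 ?ler0n.
have H6 := alg_step da0 dsa1 P3 H5.
move: H6; set Del := (1 + delta_a) / (1 - delta_sa).
set K := X + _ * Y / _ => H6.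
have Del0 : 0 <= Del by rewrite /Del divr_ge0 //; lra.
have K0 : 0 <= K.
  by rewrite /K addr_ge0 ?normqq_ge0 // divr_ge0 ?mulr_ge0 ?powR_ge0 ?normqq_ge0 //; lra.
have q2 : 0 <= 2 / q by rewrite divr_ge0.
apply: (alg3 H1).
have -> : N ^+ 2 = (N `^ q) `^ (2 / q).
  rewrite -powRrM -powR_mulrn //; congr powR; field; by rewrite gt_eqF.
have c1e : c1 = Li `^ (q / 2) * a%:R `^ (q / 2 - 1).
  by rewrite /c1 powRB ?powRr1 ?ler0n ?mulrA // pnatr_eq0 -lt0n a0 implybT.
have Li0 : 0 <= Li by rewrite /Li invr_ge0 ltW.
clearbody Del K c1 Li.
have hN : N `^ q \in Num.nneg by rewrite nnegrE powR_ge0.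
have hR : Del * c1 * K \in Num.nneg by rewrite nnegrE (mulr_ge0 (mulr_ge0 Del0 c10) K0).
apply: le_trans (ge0_ler_powR q2 hN hR H6) _.
rewrite c1e !powRM ?mulr_ge0 ?powR_ge0 // -!powRrM.
have -> : q / 2 * (2 / q) = 1 by field; rewrite gt_eqF.
have -> : (q / 2 - 1) * (2 / q) = 1 - 2 / q by field; rewrite gt_eqF.
by rewrite powRr1.
Qed.
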